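(* Let $\mathcal{A}$ be an association scheme with splitting field $L$ and let $E\subseteq\mathbb{C}$ be a field containing $L$ that is closed under complex conjugation. A non-zero $E$-linear map $\psi:E[\mathcal{A}]\to E[\mathcal{A}]$ is a Bose–Mesner algebra automorphism of $E[\mathcal{A}]$ if and only if $(MN)^\psi=M^\psi N^\psi$ and $(M\circ N)^\psi=M^\psi\circ N^\psi$ for all $M,N\in E[\mathcal{A}]$.
   Context: An association scheme on $v$ vertices is a set $\mathcal{A}=\{A_0,\ldots,A_d\}$ of $v\times v$ $(0,1)$-matrices with $A_0=I$, $\sum_iA_i=J$, closed under transpose, pairwise commuting, and with all products $A_iA_j$ in the span of $\mathcal{A}$. Its principal idempotents $E_0,\ldots,E_d$ are the pairwise orthogonal Hermitian idempotents summing to $I$ that form a basis of the span, with $A_iE_j=p_i(j)E_j$; the splitting field $L$ is $\mathbb{Q}(p_i(j): i,j)$. $E[\mathcal{A}]$ is the $E$-span of $\mathcal{A}$ and $\circ$ is the Schur (entrywise) product. An $E$-linear map $\psi$ on $E[\mathcal{A}]$ is a Bose–Mesner algebra automorphism if for all $M,N\in E[\mathcal{A}]$: $(MN)^\psi=M^\psi N^\psi$, $(M\circ N)^\psi=M^\psi\circ N^\psi$, $\psi$ is invertible, and $(M^* )^\psi=(M^\psi)^*$ ($M^*$ the conjugate transpose). *)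

(* Defs.v *)
From HB Require Import structures.
From mathcomp Require Import all_boot all_order all_algebra.
Set Implicit Arguments. Unset Strict Implicit. Unset Printing Implicit Defensive.
Import Order.TTheory GRing.Theory Num.Theory.
Local Open Scope ring_scope.

Section Defs.
Variable C : numClosedFieldType.

Definition schur (v : nat) (M N : 'M[C]_v) : 'M[C]_v :=
  \matrix_(x, y) (M x y * N x y).

Definition ctrmx (v : nat) (M : 'M[C]_v) : 'M[C]_v := (map_mx Num.conj M)^T.

Definition is_assoc_scheme (v d : nat) (A : 'I_d.+1 -> 'M[C]_v) : Prop :=
  ((forall i x y, A i x y = 0 \/ A i x y = 1) /\
      (forall i, A i != 0) /\
      A ord0 = 1%:M /\
      \sum_(i < d.+1) A i = const_mx 1 /\
      (forall i, exists j, (A i)^T = A j) /\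
      (forall i j, A i *m A j = A j *m A i) /\
      (forall i j, exists c : 'I_d.+1 -> C, A i *m A j = \sum_(k < d.+1) c k *: A k)).

Definition principal_idempotents (v d : nat) (A : 'I_d.+1 -> 'M[C]_v)
    (Eid : 'I_d.+1 -> 'M[C]_v) (p : 'I_d.+1 -> 'I_d.+1 -> C) : Prop :=
  ((forall j, Eid j *m Eid j = Eid j) /\
      (forall j k, j != k -> Eid j *m Eid k = 0) /\
      (forall j, ctrmx (Eid j) = Eid j) /\
      \sum_(j < d.+1) Eid j = 1%:M /\
      (forall c : 'I_d.+1 -> C, \sum_(j < d.+1) c j *: Eid j = 0 -> forall j, c j = 0) /\
      (forall j, exists c : 'I_d.+1 -> C, Eid j = \sum_(k < d.+1) c k *: A k) /\
      (forall i, exists c : 'I_d.+1 -> C, A i = \sum_(k < d.+1) c k *: Eid k) /\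
      (forall i j, A i *m Eid j = p i j *: Eid j)).

Definition Espan (E : {pred C}) (v d : nat) (A : 'I_d.+1 -> 'M[C]_v) (M : 'M[C]_v) : Prop :=
  exists c : 'I_d.+1 -> C, (forall k, c k \in E) /\ M = \sum_(k < d.+1) c k *: A k.

Definition Elinear_on (E : {pred C}) (v d : nat) (A : 'I_d.+1 -> 'M[C]_v)
    (psi : 'M[C]_v -> 'M[C]_v) : Prop :=
  ((forall M, Espan E A M -> Espan E A (psi M)) /\
      (forall M N, Espan E A M -> Espan E A N -> psi (M + N) = psi M + psi N) /\
      (forall a M, a \in E -> Espan E A M -> psi (a *: M) = a *: psi M)).

Definition BMA_automorphism (E : {pred C}) (v d : nat) (A : 'I_d.+1 -> 'M[C]_v)
    (psi : 'M[C]_v -> 'M[C]_v) : Prop :=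
  ((forall M N, Espan E A M -> Espan E A N -> psi (M *m N) = psi M *m psi N) /\
      (forall M N, Espan E A M -> Espan E A N -> psi (schur M N) = schur (psi M) (psi N)) /\
      (forall M N, Espan E A M -> Espan E A N -> psi M = psi N -> M = N) /\
      (forall N, Espan E A N -> exists2 M, Espan E A M & psi M = N) /\
      (forall M, Espan E A M -> psi (ctrmx M) = ctrmx (psi M))).

End Defs.

(* Main.v *)
Require Import Defs.
From HB Require Import structures.
From mathcomp Require Import all_boot all_order all_algebra.
Set Implicit Arguments. Unset Strict Implicit. Unset Printing Implicit Defensive.
Import Order.TTheory GRing.Theory Num.Theory.
Local Open Scope ring_scope.

Section Basics.
Variable C : numClosedFieldType.
Variables v d : nat.
Variable A : 'I_d.+1 -> 'M[C]_v.
Hypothesis hA : is_assoc_scheme A.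

Lemma A01 i x y : A i x y = 0 \/ A i x y = 1.
Proof. by case: hA => h _; apply: h. Qed.

Lemma A_ge0 i x y : 0 <= A i x y.
Proof. by case: (A01 i x y) => ->; rewrite ?ler01. Qed.

Lemma sumA x y : \sum_(k < d.+1) A k x y = 1.
Proof.
case: hA => _ [_ [_ [hs _]]].
by rewrite -summxE hs mxE.
Qed.

Lemma A_part k l x y : k != l -> A k x y = 1 -> A l x y = 0.
Proof.
move=> nkl hk; case: (A01 l x y) => // hl; exfalso.
have := sumA x y; rewrite (bigD1 k) //= (bigD1 l) 1?eq_sym //= hk hl.
move=> /eqP; apply/negP; rewrite -subr_eq0.
have h0 : 0 <= \sum_(i < d.+1 | (i != k) && (i != l)) A i x y.
  by apply: sumr_ge0 => i _; apply: A_ge0.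
rewrite addrA (_ : 1 + 1 = 2%:R) // addrAC.
apply: lt0r_neq0; rewrite (_ : 2%:R - 1 = 1 :> C); last by rewrite -natr1 addrK.
by rewrite ltr_pwDl.
Qed.

Lemma A_cell x y : exists k, A k x y = 1.
Proof.
have [/existsP[k /eqP hk]|/existsPn h] := boolP [exists k, A k x y == 1].
  by exists k.
have := sumA x y; rewrite big1 => [|k _]; first by move/eqP; rewrite eq_sym oner_eq0.
by case: (A01 k x y) => // /eqP; rewrite (negbTE (h k)).
Qed.

Lemma A_nz k : exists x, exists y, A k x y = 1.
Proof.
case: hA => _ [hnz _].
have [/existsP[x /existsP[y /eqP h]]|/existsPn h] :=
  boolP [exists x, exists y, A k x y == 1]; first by exists x, y.
suff hk0 : A k = 0 by move: (hnz k); rewrite hk0 eqxx.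
apply/matrixP => x y; rewrite mxE; case: (A01 k x y) => // h1.
by move: (h x) => /existsPn /(_ y); rewrite h1 eqxx.
Qed.

Lemma coefE (c : 'I_d.+1 -> C) k x y : A k x y = 1 ->
  (\sum_(l < d.+1) c l *: A l) x y = c k.
Proof.
move=> hk; rewrite summxE (bigD1 k) //= big1 => [|l hl].
  by rewrite mxE hk mulr1 addr0.
by rewrite mxE (A_part _ hk) ?mulr0 // eq_sym.
Qed.


Lemma coef_inj (c c' : 'I_d.+1 -> C) :
  \sum_(l < d.+1) c l *: A l = \sum_(l < d.+1) c' l *: A l -> forall k, c k = c' k.
Proof.
move=> h k; have [x [y hk]] := A_nz k.
by rewrite -(coefE c hk) -(coefE c' hk) h.
Qed.

Lemma sum_eq (c c' : 'I_d.+1 -> C) :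
  (forall k, c k = c' k) -> \sum_(l < d.+1) c l *: A l = \sum_(l < d.+1) c' l *: A l.
Proof. by move=> h; apply: eq_bigr => l _; rewrite h. Qed.

Lemma schur_sum (a b : 'I_d.+1 -> C) :
  schur (\sum_(l < d.+1) a l *: A l) (\sum_(l < d.+1) b l *: A l) =
  \sum_(l < d.+1) (a l * b l) *: A l.
Proof.
apply/matrixP => x y; have [k hk] := A_cell x y.
by rewrite mxE !(coefE _ hk).
Qed.

Lemma A0E : A ord0 = 1%:M.
Proof. by case: hA => _ [_ [h _]]. Qed.

Definition co (M : 'M[C]_v) (k : 'I_d.+1) : C :=
  if [pick xy : 'I_v * 'I_v | A k xy.1 xy.2 == 1] is Some xy then M xy.1 xy.2 else 0.

Lemma coP (c : 'I_d.+1 -> C) k : co (\sum_(l < d.+1) c l *: A l) k = c k.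
Proof.
rewrite /co; case: pickP => [xy /eqP h|h]; first by rewrite (coefE _ h).
have [x [y hk]] := A_nz k; by move: (h (x, y)); rewrite /= hk eqxx.
Qed.

Lemma sum_transpose k : exists j, (A k)^T = A j.
Proof. by case: hA => _ [_ [_ [_ [h _]]]]. Qed.

Lemma prod_span k l : exists c : 'I_d.+1 -> C, A k *m A l = \sum_(m < d.+1) c m *: A m.
Proof. by case: hA => _ [_ [_ [_ [_ [_ h]]]]]. Qed.

End Basics.

Section Span.
Variable C : numClosedFieldType.
Variables v d : nat.
Variable A : 'I_d.+1 -> 'M[C]_v.
Hypothesis hA : is_assoc_scheme A.
Variable E : divringClosed C.

Lemma EspanP M : Espan E A M ->
  M = \sum_(k < d.+1) co A M k *: A k /\ forall k, co A M k \in E.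
Proof.
case=> c [hc ->]; split; first by apply: sum_eq => k; rewrite coP.
by move=> k; rewrite coP.
Qed.

Lemma EspanI (c : 'I_d.+1 -> C) : (forall k, c k \in E) ->
  Espan E A (\sum_(k < d.+1) c k *: A k).
Proof. by move=> h; exists c. Qed.

Lemma Espan_add M N : Espan E A M -> Espan E A N -> Espan E A (M + N).
Proof.
move=> [a [ha ->]] [b [hb ->]]; exists (fun k => a k + b k); split.
  by move=> k; rewrite rpredD.
by rewrite -big_split /=; apply: eq_bigr => k _; rewrite scalerDl.
Qed.

Lemma Espan_scale a M : a \in E -> Espan E A M -> Espan E A (a *: M).
Proof.
move=> hE [b [hb ->]]; exists (fun k => a * b k); split.
  by move=> k; rewrite rpredM.
by rewrite scaler_sumr; apply: eq_bigr => k _; rewrite scalerA.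
Qed.

Lemma Espan_A k : Espan E A (A k).
Proof.
exists (fun l => if l == k then 1 else 0); split.
  by move=> l; case: ifP; rewrite ?rpred1 ?rpred0.
rewrite (bigD1 k) //= big1 => [|l /negbTE ->]; first by rewrite eqxx scale1r addr0.
by rewrite scale0r.
Qed.

Lemma Espan_schur M N : Espan E A M -> Espan E A N -> Espan E A (schur M N).
Proof.
move=> [a [ha ->]] [b [hb ->]]; rewrite schur_sum //; apply: EspanI => k.
by rewrite rpredM.
Qed.

Lemma Espan_entries M (c : 'I_d.+1 -> C) : M = \sum_(k < d.+1) c k *: A k ->
  (forall x y, M x y \in E) -> Espan E A M.
Proof.
move=> hM hE; exists c; split => // k.
have [x [y hk]] := A_nz hA k; by rewrite -(coefE hA c hk) -hM.
Qed.

Lemma AinE k x y : A k x y \in E.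
Proof. by case: (A01 hA k x y) => ->; rewrite ?rpred0 ?rpred1. Qed.

Lemma Espan_mul k l : Espan E A (A k *m A l).
Proof.
have [c hc] := prod_span hA k l.
apply: (Espan_entries hc) => x y; rewrite mxE.
by apply: rpred_sum => j _; rewrite rpredM ?AinE.
Qed.

End Span.
Section Main.
Variable C : numClosedFieldType.
Variables v d : nat.
Variable A : 'I_d.+1 -> 'M[C]_v.
Hypothesis hA : is_assoc_scheme A.
Variable E : divringClosed C.
Variable psi : 'M[C]_v -> 'M[C]_v.
Hypothesis hlin : Elinear_on E A psi.
Hypothesis hmul : forall M N, Espan E A M -> Espan E A N -> psi (M *m N) = psi M *m psi N.
Hypothesis hsch : forall M N, Espan E A M -> Espan E A N -> psi (schur M N) = schur (psi M) (psi N).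
Hypothesis hnz : exists2 M, Espan E A M & psi M != 0.

Lemma psi_span M : Espan E A M -> Espan E A (psi M).
Proof. by case: hlin => h _; apply: h. Qed.

Lemma psiD M N : Espan E A M -> Espan E A N -> psi (M + N) = psi M + psi N.
Proof. by case: hlin => _ [h _]; apply: h. Qed.

Lemma psiZ a M : a \in E -> Espan E A M -> psi (a *: M) = a *: psi M.
Proof. by case: hlin => _ [_ h]; apply: h. Qed.

Let EA k : Espan E A (A k) := Espan_A A E k.

Lemma Espan0 : Espan E A 0.
Proof.
have -> : (0 : 'M[C]_v) = 0 *: A ord0 by rewrite scale0r.
by apply: Espan_scale; rewrite ?rpred0.
Qed.

Lemma psi0 : psi 0 = 0.
Proof.
have -> : (0 : 'M[C]_v) = 0 *: A ord0 by rewrite scale0r.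
by rewrite psiZ ?scale0r ?rpred0.
Qed.

Lemma psiB M N : Espan E A M -> Espan E A N -> psi (M - N) = psi M - psi N.
Proof.
move=> hM hN; have hm1 : (-1 : C) \in E by rewrite rpredN rpred1.
have hN' : Espan E A (-1 *: N) by apply: Espan_scale.
by rewrite -scaleN1r psiD // psiZ // scaleN1r.
Qed.

Lemma schur0 (M : 'M[C]_v) : schur M 0 = 0.
Proof. by apply/matrixP => x y; rewrite !mxE mulr0. Qed.

Lemma schur_A_co k M : Espan E A M -> schur (A k) M = co A M k *: A k.
Proof.
move=> /(EspanP hA) [hM _]; apply/matrixP => x y.
have [l hl] := A_cell hA x y.
rewrite !mxE; have [->|nkl] := eqVneq k l.
  by rewrite hl mul1r mulr1 {1}hM (coefE hA _ hl).
by rewrite (A_part hA (_ : l != k) hl) ?mul0r ?mulr0 // eq_sym.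
Qed.

Lemma psi_ker M : Espan E A M -> psi M = 0 -> M = 0.
Proof.
move=> hM h0; have [/eqP //|nM] := boolP (M == 0); exfalso.
have [k hk] : exists k, co A M k != 0.
  have [/existsP[k hk]|/existsPn hall] := boolP [exists k, co A M k != 0].
    by exists k.
  move/eqP: nM; case; have [-> _] := EspanP hA hM.
  by apply: big1 => k _; move: (hall k); rewrite negbK => /eqP ->; rewrite scale0r.
have hAk : psi (A k) = 0.
  have := hsch (EA k) hM; rewrite h0 schur0 schur_A_co // psiZ.
    by move/eqP; rewrite scaler_eq0 (negbTE hk) /= => /eqP.
  by have [_ ->] := EspanP hA hM.
  exact: EA.
have [j hj] := sum_transpose hA k.
set N := A k *m A j.
have hN : Espan E A N by apply: Espan_mul.
have hN0 : psi N = 0 by rewrite /N hmul  // hAk mul0mx.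
have [x [y hxy]] := A_nz hA k.
have hcoN : co A N ord0 != 0.
  have hx : A ord0 x x = 1 by rewrite A0E // mxE eqxx.
  have [hNe _] := EspanP hA hN.
  rewrite -(coefE hA _ hx) -hNe /N mxE.
  apply: lt0r_neq0; rewrite (bigD1 y) //= -hj mxE hxy mulr1.
  apply: (lt_le_trans ltr01); rewrite lerDl; apply: sumr_ge0 => z _.
  by rewrite mxE; case: (A01 hA k x z) => ->; rewrite ?mulr0 ?mulr1.
have hA0 : psi (A ord0) = 0.
  have := hsch (EA ord0) hN; rewrite hN0 schur0 schur_A_co // psiZ.
    by move/eqP; rewrite scaler_eq0 (negbTE hcoN) /= => /eqP.
  by have [_ ->] := EspanP hA hN.
  exact: EA.
case: hnz => M0 hM0; rewrite -(mul1mx M0) -(A0E hA) hmul  // hA0 mul0mx.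
by rewrite eqxx.
Qed.


Lemma Espan_sub M N : Espan E A M -> Espan E A N -> Espan E A (M - N).
Proof.
move=> hM hN; rewrite -scaleN1r; apply: Espan_add => //.
by apply: Espan_scale => //; rewrite rpredN rpred1.
Qed.

Lemma psi_inj M N : Espan E A M -> Espan E A N -> psi M = psi N -> M = N.
Proof.
move=> hM hN h; apply/eqP; rewrite -subr_eq0; apply/eqP.
by apply: psi_ker; [apply: Espan_sub | rewrite psiB // h subrr].
Qed.

Lemma co0 k : co A 0 k = 0.
Proof. by rewrite /co; case: pickP => // xy _; rewrite mxE. Qed.

Definition P i k := co A (psi (A i)) k.

Lemma psiA_sum i : psi (A i) = \sum_(k < d.+1) P i k *: A k.
Proof. by have [h _] := EspanP hA (psi_span (EA i)). Qed.

Lemma P_E i k : P i k \in E.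
Proof. exact: ((EspanP hA (psi_span (EA i))).2 k). Qed.

Lemma schurAA i : schur (A i) (A i) = A i.
Proof.
by apply/matrixP => x y; rewrite mxE; case: (A01 hA i x y) => ->; rewrite ?mulr0 ?mulr1.
Qed.

Lemma schurAB i j : i != j -> schur (A i) (A j) = 0.
Proof.
move=> nij; apply/matrixP => x y; rewrite !mxE; case: (A01 hA i x y) => h.
  by rewrite h mul0r.
by rewrite (A_part hA nij h) mulr0.
Qed.

Lemma P01 i k : P i k = 0 \/ P i k = 1.
Proof.
have := hsch (EA i) (EA i); rewrite schurAA psiA_sum schur_sum // => h.
have := coef_inj hA h k => /eqP; rewrite -subr_eq0.
rewrite -{1}(mulr1 (P i k)) -mulrBr mulf_eq0 subr_eq0 => /orP[] /eqP; auto.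
Qed.

Lemma P_nz i : exists k, P i k = 1.
Proof.
have [/existsP[k /eqP hk]|/existsPn hall] := boolP [exists k, P i k == 1].
  by exists k.
exfalso; have hAi : psi (A i) = 0.
  rewrite psiA_sum; apply: big1 => k _.
  by case: (P01 i k) => h; [rewrite h scale0r | move: (hall k); rewrite h eqxx].
have := psi_ker (EA i) hAi; case: hA => _ [hnzA _] hA0.
by move: (hnzA i); rewrite hA0 eqxx.
Qed.

Lemma P_disj i j k : i != j -> P i k * P j k = 0.
Proof.
move=> nij; have := hsch (EA i) (EA j); rewrite schurAB // psi0 !psiA_sum schur_sum //.
by move=> /(congr1 (fun M => co A M k)); rewrite co0 coP.
Qed.

Definition f i := odflt i [pick k | P i k == 1].

Lemma f_spec i : P i (f i) = 1.
Proof.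
rewrite /f; case: pickP => [k /eqP //|h] /=.
by have [k hk] := P_nz i; move: (h k); rewrite hk eqxx.
Qed.

Lemma f_inj : injective f.
Proof.
move=> i j hij; apply/eqP; apply/negPn/negP => nij.
have := P_disj (f i) nij; rewrite {2}hij !f_spec mulr1 => /eqP.
by rewrite oner_eq0.
Qed.

Lemma P_only i k : P i k = 1 -> k = f i.
Proof.
move=> hk; rewrite -(f_invF f_inj k); congr f.
apply/eqP; apply/negPn/negP => nij.
have := P_disj k nij; rewrite hk -{2}(f_invF f_inj k) f_spec mulr1 => /eqP.
by rewrite oner_eq0.
Qed.

Lemma psiA i : psi (A i) = A (f i).
Proof.
rewrite psiA_sum (bigD1 (f i)) //= f_spec scale1r big1 ?addr0 // => k hk.
case: (P01 i k) => h; first by rewrite h scale0r.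
by move: hk; rewrite (P_only h) eqxx.
Qed.

Lemma psi_sumh (c : 'I_d.+1 -> C) (h : 'I_d.+1 -> 'I_d.+1) : (forall k, c k \in E) ->
  psi (\sum_(k < d.+1) c k *: A (h k)) = \sum_(k < d.+1) c k *: A (f (h k)).
Proof.
move=> hc.
suff [] : Espan E A (\sum_(k < d.+1) c k *: A (h k)) /\
  psi (\sum_(k < d.+1) c k *: A (h k)) = \sum_(k < d.+1) c k *: A (f (h k)) by [].
apply: (big_rec2 (fun M N => Espan E A M /\ psi M = N)).
  by split; [apply: Espan0 | apply: psi0].
move=> k M N _ [hM hN]; have hk : Espan E A (c k *: A (h k)) by apply: Espan_scale.
by split; [apply: Espan_add | rewrite psiD // psiZ // psiA hN].
Qed.

Lemma psi_surj N : Espan E A N -> exists2 M, Espan E A M & psi M = N.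
Proof.
move=> hN; have [hNe hc] := EspanP hA hN.
exists (\sum_(i < d.+1) co A N (f i) *: A (id i)); first by apply: EspanI.
rewrite psi_sumh // {2}hNe [RHS](reindex_inj f_inj) /=.
by [].
Qed.

Lemma psi1 : psi 1%:M = 1%:M.
Proof.
have h1 : Espan E A 1%:M by rewrite -(A0E hA).
have [M0 hM0 hM0e] := psi_surj h1.
have := hmul h1 hM0; rewrite mul1mx hM0e mulmx1 => <-; by [].
Qed.

Lemma diagT a b a' : (A a)^T = A a' ->
  (schur 1%:M (A a *m A b) == 0) = (b != a').
Proof.
move=> ha; have [->|nba] := eqVneq b a'; rewrite /=.
  apply/negbTE/eqP => /matrixP.
  have [x [y hxy]] := A_nz hA a.
  move=> /(_ x x); rewrite !mxE eqxx mul1r => /eqP; apply/negP.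
  apply: lt0r_neq0; rewrite (bigD1 y) //= -ha mxE hxy mulr1.
  apply: (lt_le_trans ltr01); rewrite lerDl; apply: sumr_ge0 => z _.
  by rewrite mxE; case: (A01 hA a x z) => ->; rewrite ?mulr0 ?mulr1.
apply/eqP/matrixP => x y; rewrite !mxE.
have [<-|nxy] := eqVneq x y; last by rewrite mul0r.
rewrite mul1r; apply: big1 => z _.
have -> : A a x z = A a' z x by rewrite -ha mxE.
case: (A01 hA a' z x) => h; first by rewrite h mul0r.
by rewrite (A_part hA (_ : a' != b) h) ?mulr0 // eq_sym.
Qed.

Lemma f_transpose k j : (A k)^T = A j -> (A (f k))^T = A (f j).
Proof.
move=> hj; have [l hl] := sum_transpose hA (f k); rewrite hl.
have hS : Espan E A (schur 1%:M (A k *m A j)).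
  by apply: Espan_schur => //; [rewrite -(A0E hA) | apply: Espan_mul].
have hnz' : schur 1%:M (A k *m A j) != 0 by rewrite (diagT _ hj) eqxx.
have : psi (schur 1%:M (A k *m A j)) != 0.
  by apply: contra hnz' => /eqP h; apply/eqP; apply: psi_ker.
rewrite hsch //; last by apply: Espan_mul.
  rewrite psi1 hmul // !psiA (diagT _ hl) negbK => /eqP -> //.
by rewrite -(A0E hA).
Qed.


Definition t k := odflt k [pick j | (A k)^T == A j].

Lemma t_spec k : (A k)^T = A (t k).
Proof.
rewrite /t; case: pickP => [j /eqP //|h] /=.
by have [j hj] := sum_transpose hA k; move: (h j); rewrite hj eqxx.
Qed.

Lemma ctrmxA k : ctrmx (A k) = A (t k).
Proof.
rewrite -t_spec; apply/matrixP => x y; rewrite !mxE.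
by case: (A01 hA k y x) => ->; rewrite ?conjC0 ?conjC1.
Qed.

Lemma ctrmx_sum (c : 'I_d.+1 -> C) (B : 'I_d.+1 -> 'M[C]_v) :
  ctrmx (\sum_(k < d.+1) c k *: B k) = \sum_(k < d.+1) (c k)^* *: ctrmx (B k).
Proof.
apply/matrixP => x y; rewrite /ctrmx !mxE summxE rmorph_sum /= summxE; apply: eq_bigr => k _.
by rewrite !mxE rmorphM.
Qed.

Lemma final_dir : (forall x, x \in E -> x^* \in E) -> BMA_automorphism E A psi.
Proof.
move=> hconj; split; first exact: hmul.
split; first exact: hsch.
split; first exact: psi_inj.
split; first exact: psi_surj.
move=> M [c [hc ->]].
have hcs : forall k, (c k)^* \in E by move=> k; apply: hconj.
rewrite ctrmx_sum.
under eq_bigr do rewrite ctrmxA.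
rewrite psi_sumh // psi_sumh //.
rewrite ctrmx_sum; apply: eq_bigr => k _; rewrite ctrmxA.
by rewrite -(f_transpose (t_spec k)) t_spec.
Qed.

End Main.

Theorem theorem3p3 (C : numClosedFieldType) (v d : nat)
    (A : 'I_d.+1 -> 'M[C]_v) (Eid : 'I_d.+1 -> 'M[C]_v) (p : 'I_d.+1 -> 'I_d.+1 -> C)
    (E : divringClosed C) (psi : 'M[C]_v -> 'M[C]_v) :
  is_assoc_scheme A ->
  principal_idempotents A Eid p ->
  (* E contains the splitting field L = Q(p_i(j)) *)
  (forall i j, p i j \in E) ->
  (* E is closed under complex conjugation *)
  (forall x, x \in E -> x^* \in E) ->
  Elinear_on E A psi ->
  (exists2 M, Espan E A M & psi M != 0) ->
  (BMA_automorphism E A psi <->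
   (forall M N, Espan E A M -> Espan E A N -> psi (M *m N) = psi M *m psi N) /\
   (forall M N, Espan E A M -> Espan E A N -> psi (schur M N) = schur (psi M) (psi N))).
Proof.
move=> hA _ _ hconj hlin hnz; split.
  by case=> h1 [h2 _]; split.
case=> hmul hsch; exact: (final_dir hA hlin hmul hsch hnz hconj).
Qed.
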